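(* Let $G'$ be a finite loopless multigraph with edge multiplicity at most $2$ and maximum degree $\Delta>10^{20}$, let $H$ be the subgraph of $G'$ induced by the vertices of degree less than $\Delta/3$, and let $\sigma$ be a proper edge coloring of $G'$. Apply Phase I (defined in the context) to $\sigma$. Then for every two adjacent vertices $u,v\in V(G')\setminus V(H)$ with $\deg(u)=\deg(v)$, $$\Pr\big[u\notin L \ \text{ and } \ |S_{\sigma_1}(u)\,\triangle\, S_{\sigma_1}(v)|<10\big]<\frac{1}{\Delta^{7}}.$$
   Context: Phase I: (1) each edge $e\in E(G')\setminus E(H)$ is independently ''uncolored'' with probability $180/\Delta$; for a vertex $v$, $UC_v$ denotes the set of edges incident to $v$ that are uncolored in this step. (2) A vertex $v$ is recovered if $|UC_v|>290$; for every recovered vertex, all edges of $UC_v$ get back their color from $\sigma$. The resulting partial edge coloring is $\sigma_1$: an edge is uncolored in $\sigma_1$ iff it was uncolored in step (1) and neither endpoint is recovered; every other edge has its $\sigma$-color. $L$ is the set of vertices $v\in V(G')\setminus V(H)$ incident to fewer than $20$ edges uncolored in $\sigma_1$. For a partial coloring $c$, $S_c(v)$ is the set of colors on colored edges incident to $v$; $A\triangle B=(A\setminus B)\cup(B\setminus A)$. *)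

(* Defs.v *)
From mathcomp Require Import all_boot all_order all_algebra.
Set Implicit Arguments. Unset Strict Implicit. Unset Printing Implicit Defensive.
Import Order.TTheory GRing.Theory Num.Theory.

(* A finite multigraph: vertex type V, edge type E, each edge e has two
   endpoints src e and tgt e (the orientation is irrelevant). Parallel edges
   are distinct elements of E. *)
Section Multigraph.
Variables (V E : finType) (src tgt : E -> V).

Definition incident (e : E) (v : V) : bool := (src e == v) || (tgt e == v).

Definition deg (v : V) : nat := #|[set e | incident e v]|.

Definition maxdeg : nat := \max_(v : V) deg v.

Definition loopless : Prop := forall e, src e != tgt e.

Definition mult_le2 : Prop :=
  forall u v, u != v -> #|[set e | incident e u && incident e v]| <= 2.

Definition adjacent (u v : V) : bool :=
  [exists e, ((src e == u) && (tgt e == v)) || ((src e == v) && (tgt e == u))].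

Definition inH (v : V) : bool := 3 * deg v < maxdeg.

Definition edgeH (e : E) : bool := inH (src e) && inH (tgt e).

Definition proper_coloring (C : finType) (sigma : E -> C) : Prop :=
  forall e f v, e != f -> incident e v -> incident f v -> sigma e != sigma f.

(* edges eligible to be uncolored in step (1): E(G') \ E(H) *)
Definition candidates : {set E} := [set e | ~~ edgeH e].

(* U = set of edges uncolored in step (1) *)
Definition UC (U : {set E}) (v : V) : {set E} := [set e in U | incident e v].

Definition recovered (U : {set E}) (v : V) : bool := 290 < #|UC U v|.

(* edges uncolored in sigma_1 *)
Definition uncol1 (U : {set E}) : {set E} :=
  [set e in U | ~~ recovered U (src e) && ~~ recovered U (tgt e)].

Definition inL (U : {set E}) (v : V) : bool :=
  ~~ inH v && (#|[set e in uncol1 U | incident e v]| < 20).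

Definition Scol (C : finType) (sigma : E -> C) (U : {set E}) (v : V) : {set C} :=
  [set sigma e | e in [set e | incident e v && (e \notin uncol1 U)]].

Definition symdiff (T : finType) (A B : {set T}) : {set T} := (A :\: B) :|: (B :\: A).

(* Probability of an event under Phase I, step (1): every candidate edge is
   independently put in U with probability p. *)
Definition phaseI_prob (R : realFieldType) (p : R) (A : pred {set E}) : R :=
  \sum_(U : {set E} | (U \subset candidates) && A U)
     p ^+ #|U| * (1 - p) ^+ (#|candidates| - #|U|).

End Multigraph.

(* Main.v *)
Require Import Defs.
From Stdlib Require Import ZArith.
From mathcomp Require Import all_boot all_order all_algebra.
From mathcomp Require Import zify ring lra.
Import Order.TTheory GRing.Theory Num.Theory.
Local Open Scope ring_scope.

Lemma inj_le (T : finType) (A B : {set T}) : (#|A| <= #|B|)%N ->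
  exists g : T -> T, {in A, forall x, g x \in B} /\ {in A &, injective g}.
Proof.
move=> hAB.
have hi : forall x, x \in A -> (index x (enum A) < size (enum B))%N.
  move=> x xA; rewrite -cardE (leq_trans _ hAB) // cardE index_mem mem_enum //.
exists (fun x => nth x (enum B) (index x (enum A))); split.
  by move=> x xA /=; rewrite -mem_enum mem_nth // hi.
move=> x y xA yA /=.
rewrite (set_nth_default y x (hi x xA)) => /eqP.
rewrite nth_uniq ?enum_uniq ?hi // => /eqP hxy.
by rewrite -[x](nth_index x (s := enum A)) ?mem_enum // hxy nth_index ?mem_enum.
Qed.

Lemma subset_card (T : finType) (A : {set T}) k : (k <= #|A|)%N ->
  exists2 S : {set T}, S \subset A & #|S| = k.
Proof.
move=> hk; exists [set x in take k (enum A)].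
  by apply/subsetP => x; rewrite inE => /mem_take; rewrite mem_enum.
rewrite cardsE (card_uniqP (take_uniq k (enum_uniq (mem A)))) size_takel //.
by rewrite -cardE.
Qed.

Lemma exists_pi (E C : finType) (sigma : E -> C) (A B : {set E}) :
  #|A| = #|B| -> {in A &, injective sigma} -> {in B &, injective sigma} ->
  exists pi : E -> E, [/\ {in A, forall e, pi e \in B}, {in A &, injective pi} &
     forall e f, e \in A -> f \in B -> sigma f = sigma e -> pi e = f].
Proof.
move=> hAB iA iB.
pose A1 := [set e in A | [exists f in B, sigma f == sigma e]].
pose B1 := [set f in B | [exists e in A, sigma e == sigma f]].
have c1 : (#|B1| <= #|A1|)%N.
  have j1 : {in B1 &, injective sigma}.
    by move=> x y; rewrite !inE => /andP[xB _] /andP[yB _]; apply: iB.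
  have j2 : {in A1 &, injective sigma}.
    by move=> x y; rewrite !inE => /andP[xB _] /andP[yB _]; apply: iA.
  rewrite -(card_in_imset j1) -(card_in_imset j2).
  apply: subset_leq_card; apply/subsetP => c /imsetP[f].
  rewrite inE => /andP[fB /existsP[e /andP[eA /eqP he]]] ->.
  apply/imsetP; exists e => //; rewrite inE eA /=.
  by apply/existsP; exists f; rewrite fB he eqxx.
have sA1 : A1 \subset A by apply/subsetP => x; rewrite inE => /andP[].
have sB1 : B1 \subset B by apply/subsetP => x; rewrite inE => /andP[].
have c2 : (#|A :\: A1| <= #|B :\: B1|)%N.
  rewrite !cardsD (setIidPr sA1) (setIidPr sB1) hAB.
  have := subset_leq_card sB1; lia.
have [g [gB ginj]] := @inj_le E _ _ c2.
have inA2 : forall e, e \in A ->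
    (forall f, (f \in B) && (sigma f == sigma e) = false) -> e \in A :\: A1.
  move=> e eA hn; rewrite inE eA andbT inE eA /=.
  by apply/negP => /existsP[f /andP[fB fe]]; have := hn f; rewrite fB fe.
have inB1 : forall e f, e \in A -> f \in B -> sigma f = sigma e -> f \in B1.
  by move=> e f eA fB h; rewrite inE fB /=; apply/existsP; exists e; rewrite eA h eqxx.
exists (fun e => if [pick f in B | sigma f == sigma e] is Some f then f else g e).
split.
- move=> e eA; case: pickP => [f /andP[fB _] // | hn].
  by have := gB e (inA2 e eA hn); rewrite inE => /andP[].
- move=> e1 e2 e1A e2A.
  case: pickP => [f1 /andP[f1B /eqP h1] | hn1];
    case: pickP => [f2 /andP[f2B /eqP h2] | hn2].
  + by move=> hf; apply: iA => //; rewrite -h1 -h2 hf.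
  + move=> hf; have := gB e2 (inA2 e2 e2A hn2); rewrite -hf inE.
    by rewrite (inB1 e1 f1 e1A f1B h1).
  + move=> hf; have := gB e1 (inA2 e1 e1A hn1); rewrite hf inE.
    by rewrite (inB1 e2 f2 e2A f2B h2).
  + by apply: ginj; apply: inA2.
- move=> e f eA fB hfe; case: pickP => [f' /andP[f'B /eqP h'] | hn].
    by apply: iB => //; rewrite h' hfe.
  by have := hn f; rewrite fB hfe eqxx.
Qed.

Lemma superset_prob (R : realFieldType) (T : finType) (K W : {set T}) (p : R) :
  W \subset K ->
  \sum_(U : {set T} | (U \subset K) && (W \subset U))
     p ^+ #|U| * (1 - p) ^+ (#|K| - #|U|) = p ^+ #|W|.
Proof.
move=> WK.
pose F := fun i => if i \in K then p else 0.
pose G := fun i => if i \in W then 0 else if i \in K then 1 - p else 1.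
have hd := @bigA_distr R 0 1 *%R +%R T F G.
have lhs : \prod_i (F i + G i) = p ^+ #|W|.
  rewrite (eq_bigr (fun i => if i \in W then p else 1)) => [|i _].
    by rewrite -big_mkcond prodr_const.
  rewrite /F /G; case: (boolP (i \in W)) => iW.
    by rewrite (subsetP WK i iW) addr0.
  by case: (i \in K); [rewrite addrC subrK | rewrite add0r].
rewrite -lhs hd big_mkcond /=; apply: eq_bigr => J _.
case: ifP => [/andP[JK WJ] | hn].
  rewrite (bigID (fun i => i \in J)) /=.
  rewrite (eq_bigr (fun _ => p)) => [|i iJ]; last by rewrite iJ /F (subsetP JK i iJ).
  rewrite prodr_const.
  rewrite (eq_bigr (fun i => if i \in K then 1 - p else 1)) => [|i iJ]; last first.
    rewrite (negbTE iJ) /G ifN //; apply: contra iJ; exact: (subsetP WJ).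
  rewrite -big_mkcondr (eq_bigl (mem (K :\: J))) => [|i]; last by rewrite !inE.
  by rewrite prodr_const cardsD (setIidPr JK).
move/negbT: hn => /nandP[/subsetPn[i iJ niK] | /subsetPn[i iW niJ]].
  by rewrite (bigD1 i) //= iJ /F (negbTE niK) mul0r.
by rewrite (bigD1 i) //= (negbTE niJ) /G iW mul0r.
Qed.


Lemma expn_mono a b m : (a <= b)%N -> (a ^ m <= b ^ m)%N.
Proof. by case: m => [|m] hab //; rewrite leq_exp2r. Qed.

Lemma ffact_le_exp n m : (n ^_ m <= n ^ m)%N.
Proof.
elim: m n => [|m IH] n; first by [].
rewrite ffactnS expnS leq_mul2l; apply/orP; right.
exact: leq_trans (IH _) (expn_mono _ _ m (leq_pred n)).
Qed.

Lemma numeric D : (10 ^ 20 < D)%N -> (180 <= D)%N /\ (180 ^ 20 < 11`! * D ^ 2)%N.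
Proof.
move=> hD.
have X0 : (0 < 10 ^ 20)%N. rewrite expn_gt0. exact: isT.
have h1 : (18 ^ 20 < 11`! * 10 ^ 20)%N. rewrite !factS fact0. Zify.zify. reflexivity.
have E1 : (180 ^ 20 = 18 ^ 20 * 10 ^ 20)%N. rewrite -expnMn. congr (expn _ _).
have h3 : (10 ^ 3 <= 10 ^ 20)%N. rewrite leq_pexp2l. exact: isT. exact: isT. exact: isT.
rewrite E1; clear E1.
move: (10 ^ 20)%N X0 hD h1 h3 => X X0 hD h1 h3.
move: (18 ^ 20)%N (11`!)%N h1 => a f h1.
split.
  by apply: leq_trans _ (ltnW (leq_ltn_trans h3 hD)).
have h2 : (X * X <= D ^ 2)%N by rewrite expnS expn1 leq_mul // ltnW.
apply: (@leq_trans (f * (X * X))%N); last by rewrite leq_mul2l h2 orbT.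
rewrite mulnA (ltn_pmul2r X0). exact: h1.
Qed.


Lemma final_num (R : realFieldType) (N D a : nat) : (0 < D)%N ->
  (N * a * D ^ 7 < D ^ 20)%N -> a%:R = (180 : R) ^+ 20 ->
  (180 / D%:R : R) ^+ 20 *+ N < 1 / D%:R ^+ 7.
Proof.
move=> D0 h27 ea.
have Dpos : 0 < D%:R :> R by rewrite ltr0n.
have Dn0 : D%:R != 0 :> R by rewrite gt_eqF.
have hR : N%:R * (180 : R) ^+ 20 * D%:R ^+ 7 < D%:R ^+ 20.
  by rewrite -ea -!natrX -!natrM ltr_nat.
rewrite -[_ *+ N]mulr_natl expr_div_n.
have e1 : N%:R * (180 ^+ 20 / D%:R ^+ 20) =
    (N%:R * 180 ^+ 20 * D%:R ^+ 7) / D%:R ^+ 27 :> R by field.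
have e2 : 1 / D%:R ^+ 7 = D%:R ^+ 20 / D%:R ^+ 27 :> R by field.
by rewrite e1 e2 ltr_pM2r // invr_gt0 exprn_gt0.
Qed.

Theorem lemma3 (R : realFieldType) (V E C : finType) (src tgt : E -> V)
    (sigma : E -> C) :
  loopless src tgt ->
  mult_le2 src tgt ->
  (10 ^ 20 < maxdeg src tgt)%N ->
  proper_coloring src tgt sigma ->
  forall u v : V,
    ~~ inH src tgt u -> ~~ inH src tgt v ->
    adjacent src tgt u v ->
    deg src tgt u = deg src tgt v ->
    phaseI_prob src tgt (180 / (maxdeg src tgt)%:R : R)
      (fun U => ~~ inL src tgt U u &&
                (#|symdiff (Scol src tgt sigma U u) (Scol src tgt sigma U v)| < 10)%N)
    < 1 / ((maxdeg src tgt)%:R ^+ 7).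
Proof.
move=> hloop hmult hD hprop u v nHu nHv adj hdeg.
have [D180 Dbig] := numeric _ hD; clear hD.
set D := maxdeg src tgt in D180 Dbig *.
have hC : ('C(D, 11) * 11`! <= D ^ 11)%N by rewrite bin_ffact ffact_le_exp.
have ea : ((180 ^ 20)%N%:R = (180 : R) ^+ 20) by rewrite natrX.
have ff := fact_gt0 11.
move: (180 ^ 20)%N (11`!)%N Dbig ea ff hC => a f Dbig ea ff hC.
have D0 : (0 < D)%N := leq_trans (isT : (0 < 180)%N) D180.
set K := candidates src tgt.
pose Eu := [set e | incident src tgt e u].
pose Ev := [set e | incident src tgt e v].
have cardEuv : #|Eu| = #|Ev| by exact: hdeg.
have injE : forall w, {in [set e | incident src tgt e w] &, injective sigma}.
  move=> w e f0; rewrite !inE => ew fw hef; apply/eqP/negPn/negP => nef.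
  by have := hprop e f0 w nef ew fw; rewrite hef eqxx.
have [pi [piEv piinj picol]] := @exists_pi E C sigma Eu Ev cardEuv (injE u) (injE v).
have uv : u != v.
  apply/negP => /eqP huv; move: adj; rewrite /adjacent -huv => /existsP[e].
  by rewrite orbb => /andP[/eqP h1 /eqP h2]; have := hloop e; rewrite h1 h2 eqxx.
pose W (S : {set E}) := S :|: pi @: S.
pose F := [set S : {set E} | (S \subset Eu) && (#|S| == 11)%N && (20 <= #|W S|)%N].
have witness : forall U : {set E},
    ~~ inL src tgt U u &&
      (#|symdiff (Scol src tgt sigma U u) (Scol src tgt sigma U v)| < 10)%N ->
    exists2 S, S \in F & W S \subset U.
  move=> U /andP[nL hsd].
  set Xu := [set e in uncol1 src tgt U | incident src tgt e u].
  set Xv := [set e in uncol1 src tgt U | incident src tgt e v].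
  have h20 : (20 <= #|Xu|)%N by move: nL; rewrite /inL nHu /= -leqNgt.
  have XuEu : Xu \subset Eu by apply/subsetP => e; rewrite !inE => /andP[].
  have XvEv : Xv \subset Ev by apply/subsetP => e; rewrite !inE => /andP[].
  have uU : uncol1 src tgt U \subset U by apply/subsetP => e; rewrite !inE => /andP[].
  have Xu1 : Xu \subset uncol1 src tgt U.
    by apply/subsetP => e; rewrite [e \in Xu]inE => /andP[].
  have Xv1 : Xv \subset uncol1 src tgt U.
    by apply/subsetP => e; rewrite [e \in Xv]inE => /andP[].
  set Gd := Xu :&: pi @^-1: Xv.
  set Bd := Xu :\: pi @^-1: Xv.
  have hGB : (#|Gd| + #|Bd| = #|Xu|)%N := cardsID (pi @^-1: Xv) Xu.
  have hB : (#|Bd| <= #|symdiff (Scol src tgt sigma U u) (Scol src tgt sigma U v)|)%N.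
    have BdEu : forall e, e \in Bd -> e \in Eu.
      by move=> e; rewrite inE => /andP[_ eX]; apply: (subsetP XuEu).
    have jB : {in Bd &, injective (sigma \o pi)}.
      move=> x y xB yB /= hxy; apply: piinj; try exact: BdEu.
      by apply: (injE v) => //; apply: piEv; apply: BdEu.
    rewrite -(card_in_imset jB); apply: subset_leq_card.
    apply/subsetP => c /imsetP[e eB ->] /=.
    have eEu := BdEu e eB.
    move: eB; rewrite inE => /andP[npe eXu].
    have pEv : incident src tgt (pi e) v by have := piEv e eEu; rewrite inE.
    rewrite /symdiff; apply/setUP; right; rewrite inE; apply/andP; split.
      apply/imsetP => -[e' he' hc]; move: he'; rewrite inE => /andP[e'u e'nu].
      have e'Eu : e' \in Eu by rewrite inE.
      have ee : e' = e by apply: piinj => //; apply: picol => //; exact: piEv.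
      by move: e'nu; rewrite ee (subsetP Xu1 e eXu).
    apply/imsetP; exists (pi e) => //; rewrite inE pEv /=.
    apply: contra npe => h; rewrite inE inE h pEv.
    done.
  have hG : (11 <= #|Gd|)%N by clear -h20 hGB hB hsd; lia.
  have [S SG cS] := @subset_card E Gd 11 hG.
  have SXu : S \subset Xu by apply: subset_trans SG (subsetIl _ _).
  have SEu : S \subset Eu by apply: subset_trans SXu XuEu.
  have piS : forall e, e \in S -> pi e \in Xv.
    by move=> e eS; have := subsetP SG e eS; rewrite inE => /andP[_]; rewrite inE.
  have jS : {in S &, injective pi}.
    by move=> x y xS yS; apply: piinj; apply: (subsetP SEu).
  exists S.
    rewrite inE cS eqxx andbT SEu /=.
    rewrite /W cardsU (card_in_imset jS) cS.
    have : (#|S :&: pi @: S| <= 2)%N.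
      apply: leq_trans (hmult u v uv); apply: subset_leq_card.
      apply/subsetP => e; rewrite !inE => /andP[eS /imsetP[x xS exe]].
      have := subsetP SEu _ eS; rewrite inE => ->.
      by have := piEv x (subsetP SEu x xS); rewrite inE -exe.
    by move=> hI; clear -hI cS; lia.
  rewrite /W subUset; apply/andP; split.
    by apply: subset_trans (subset_trans SXu _) uU; apply/subsetP => e; rewrite inE => /andP[].
  apply/subsetP => e /imsetP[x xS ->]; apply: (subsetP uU).
  by have := piS x xS; rewrite inE => /andP[].
have Dpos : 0 < D%:R :> R by rewrite ltr0n.
have Dn0 : D%:R != 0 :> R by rewrite gt_eqF.
pose p : R := 180 / D%:R.
have p0 : 0 <= p by rewrite /p divr_ge0 // ltW.
have p1 : p <= 1 by rewrite /p ler_pdivrMr // mul1r ler_nat.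
pose w (U : {set E}) := p ^+ #|U| * (1 - p) ^+ (#|K| - #|U|).
have wge0 : forall U, 0 <= w U.
  by move=> U; rewrite /w mulr_ge0 // exprn_ge0 // subr_ge0.
rewrite /phaseI_prob -/K -/p.
apply: (@le_lt_trans _ _ (\sum_(U : {set E} | U \subset K)
    \sum_(S in F) (if W S \subset U then w U else 0))).
  rewrite [X in _ <= X](bigID (fun U => ~~ inL src tgt U u &&
      (#|symdiff (Scol src tgt sigma U u) (Scol src tgt sigma U v)| < 10)%N)) /=.
  rewrite -[X in X <= _]addr0; apply: lerD.
    apply: ler_sum => U /andP[UK hA]; have [S0 S0F WS0] := witness U hA.
    rewrite (bigD1 S0) //= WS0 -/(w U) lerDl.
    by apply: sumr_ge0 => S _; case: ifP => // _; exact: wge0.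
  by apply: sumr_ge0 => U _; apply: sumr_ge0 => S _; case: ifP => // _; exact: wge0.
rewrite exchange_big /=.
apply: (@le_lt_trans _ _ (\sum_(S in F) p ^+ 20)).
  apply: ler_sum => S SF; rewrite -big_mkcondr /=.
  have hW : (20 <= #|W S|)%N by move: SF; rewrite inE => /andP[_ ->].
  apply: le_trans (ler_wiXn2l p0 p1 hW).
  case: (boolP (W S \subset K)) => hWK.
    by rewrite /w superset_prob.
  rewrite big_pred0 ?exprn_ge0 // => U; apply/negP => /andP[UK WU].
  by case/negP: hWK; exact: subset_trans WU UK.
rewrite sumr_const.
have hF : (#|F| <= 'C(D, 11))%N.
  apply: (@leq_trans #|[set S : {set E} | (S \subset Eu) && (#|S| == 11)%N]|).
    apply: subset_leq_card; apply/subsetP => S; rewrite !inE.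
    by case/andP => /andP[-> ->].
  rewrite cards_draws; apply: leq_bin2l.
  have hdu : (deg src tgt u <= maxdeg src tgt)%N by rewrite /maxdeg; exact: (@leq_bigmax _ (fun w => deg src tgt w) u).
  exact: hdu.
have hN : (#|F| * f <= D ^ 11)%N by apply: leq_trans hC; rewrite leq_mul2r hF orbT.
have h13 : (#|F| * a < D ^ 13)%N.
  rewrite -(ltn_pmul2r ff); apply: (@leq_ltn_trans (D ^ 11 * a)).
    by rewrite mulnAC leq_mul2r hN orbT.
  rewrite (_ : D ^ 13 = D ^ 11 * D ^ 2)%N; last by rewrite -expnD.
  by rewrite -mulnA ltn_pmul2l ?expn_gt0 ?D0 // mulnC.
have h27 : (#|F| * a * D ^ 7 < D ^ 20)%N.
  rewrite (_ : D ^ 20 = D ^ 13 * D ^ 7)%N; last by rewrite -expnD.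
  by rewrite ltn_pmul2r ?expn_gt0 ?D0.
exact: (@final_num R _ _ _ D0 h27 ea).
Qed.
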